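(* Let $G$ be a graph. The following are equivalent: (a1) $M_1(G)$ is a non-trivial matroid and $G$ is a connected cacti-graph; (a2) $M_1(G)$ is a connected matroid.
   Context: Graphs are finite, may have loops and parallel edges, and have no isolated vertices. A leaf is a vertex incident to exactly one edge, which is not a loop. A cacti-graph is a graph with no isolated vertices, no leaves, and no component that is a cycle. For $X\subseteq E(G)$, $G\langle X\rangle$ is the subgraph with edge set $X$ and vertex set the vertices incident to $X$. $M_1(G)$ is the matroid on $E(G)$ whose circuits are the inclusion-minimal members of $\{C\subseteq E(G):C\neq\emptyset,\ |C|=|V(G\langle C\rangle)|+1\}$. A matroid is non-trivial if it has at least one circuit and at least one cocircuit; it is connected if its ground set has at least two elements and every two elements lie in a common circuit. *)

(* Defs.v *)
From mathcomp Require Import all_boot.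
Set Implicit Arguments. Unset Strict Implicit. Unset Printing Implicit Defensive.

(* A finite graph with loops and parallel edges: vertex type V, edge type E,
   and each edge e has (unordered) ends (ends e).1, (ends e).2;
   e is a loop iff both ends coincide. V(G) = all of V. *)

Definition incident (V E : finType) (ends : E -> V * V) (v : V) (e : E) : bool :=
  ((ends e).1 == v) || ((ends e).2 == v).

Definition is_loop (V E : finType) (ends : E -> V * V) (e : E) : bool :=
  (ends e).1 == (ends e).2.

Definition no_isolated (V E : finType) (ends : E -> V * V) : Prop :=
  forall v : V, exists e : E, incident ends v e.

Definition is_leaf (V E : finType) (ends : E -> V * V) (v : V) : Prop :=
  exists e : E, [set f | incident ends v f] = [set e] /\ ~~ is_loop ends e.

Definition adj (V E : finType) (ends : E -> V * V) : rel V :=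
  fun u w => [exists e, ((ends e == (u, w)) || (ends e == (w, u)))].

Definition component (V E : finType) (ends : E -> V * V) (v : V) : {set V} :=
  [set u | connect (adj ends) v u].

(* edges of the subgraph induced on a vertex set K (for components this is
   exactly the edge set of the component) *)
Definition comp_edges (V E : finType) (ends : E -> V * V) (K : {set V}) : {set E} :=
  [set e | ((ends e).1 \in K) && ((ends e).2 \in K)].

(* The component with vertex set K is a cycle: distinct vertices
   v_0..v_n and distinct edges e_0..e_n with e_i joining v_i and v_{i+1 mod n+1},
   and these are all the vertices and edges of the component.
   (n = 0: a single loop; n = 1: two parallel edges.) *)
Definition is_cycle_comp (V E : finType) (ends : E -> V * V) (K : {set V}) : Prop :=
  exists (n : nat) (f : 'I_n.+1 -> V) (g : 'I_n.+1 -> E),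
    [/\ injective f, injective g,
        (forall i, ends (g i) = (f i, f (ordS i)) \/ ends (g i) = (f (ordS i), f i)),
        K = f @: setT & comp_edges ends K = g @: setT].

Definition cacti_graph (V E : finType) (ends : E -> V * V) : Prop :=
  [/\ no_isolated ends,
      (forall v : V, ~ is_leaf ends v) &
      (forall v : V, ~ is_cycle_comp ends (component ends v))].

Definition graph_connected (V E : finType) (ends : E -> V * V) : Prop :=
  forall u w : V, connect (adj ends) u w.

Definition vset (V E : finType) (ends : E -> V * V) (X : {set E}) : {set V} :=
  [set v | [exists e in X, incident ends v e]].

Definition M1_circuit (V E : finType) (ends : E -> V * V) (C : {set E}) : bool :=
  minset (fun X : {set E} => (X != set0) && (#|X| == #|vset ends X| + 1)) C.

Definition m_indep (E : finType) (circ : {set E} -> bool) (X : {set E}) : bool :=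
  [forall C : {set E}, circ C ==> ~~ (C \subset X)].

Definition m_basis (E : finType) (circ : {set E} -> bool) (B : {set E}) : bool :=
  maxset (m_indep circ) B.

Definition m_cocircuit (E : finType) (circ : {set E} -> bool) (D : {set E}) : bool :=
  minset (fun X : {set E} => [forall B : {set E}, m_basis circ B ==> (X :&: B != set0)]) D.

Definition m_nontrivial (E : finType) (circ : {set E} -> bool) : Prop :=
  (exists C, circ C) /\ (exists D, m_cocircuit circ D).

Definition m_connected (E : finType) (circ : {set E} -> bool) : Prop :=
  1 < #|E| /\
  forall e f : E, e != f -> exists C, [/\ circ C, e \in C & f \in C].

(* Main.v *)
Require Import Defs.
From mathcomp Require Import all_boot.
From mathcomp Require Import zify.
Set Implicit Arguments. Unset Strict Implicit. Unset Printing Implicit Defensive.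

Section M1.
Variables (V E : finType) (ends : E -> V * V).

Local Notation vs := (vset ends).
Local Notation circ := (M1_circuit ends).

Lemma in_vs v (X : {set E}) : (v \in vs X) = [exists e in X, incident ends v e].
Proof. by rewrite inE. Qed.

Lemma vsS (A B : {set E}) : A \subset B -> vs A \subset vs B.
Proof.
move=> AB; apply/subsetP=> v; rewrite !in_vs => /existsP[e /andP[eA ie]].
by apply/existsP; exists e; rewrite (subsetP AB).
Qed.

Lemma vsU (A B : {set E}) : vs (A :|: B) = vs A :|: vs B.
Proof.
apply/setP=> v; rewrite in_setU !in_vs; apply/existsP/orP.
  by case=> e /andP[]; rewrite inE => /orP[] eX ie; [left|right]; apply/existsP; exists e; rewrite eX.
by case=> /existsP[e /andP[eX ie]]; exists e; rewrite inE eX ?orbT.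
Qed.

Lemma vs0 : vs set0 = set0.
Proof. by apply/setP=> v; rewrite in_vs inE; apply/existsP=> -[e]; rewrite inE. Qed.

Lemma ends_vs e (X : {set E}) : e \in X -> ((ends e).1 \in vs X) && ((ends e).2 \in vs X).
Proof.
by move=> eX; rewrite !in_vs; apply/andP; split; apply/existsP; exists e;
  rewrite eX /incident eqxx ?orbT.
Qed.

Lemma vs1_gt0 e : 0 < #|vs [set e]|.
Proof. by apply/card_gt0P; exists (ends e).1; case/andP: (ends_vs (set11 e)). Qed.

Lemma vs_nonempty (X : {set E}) : X != set0 -> 0 < #|vs X|.
Proof.
case/set0Pn=> e eX; apply: leq_trans (vs1_gt0 e) _; apply: subset_leq_card.
by apply: vsS; rewrite sub1set.
Qed.

Lemma cardUI_d (A B : {set E}) :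
  #|A :|: B| + #|A :&: B| + #|vs A| + #|vs B| =
  #|A| + #|B| + #|vs (A :|: B)| + #|vs A :&: vs B|.
Proof.
have h1 := cardsUI A B; have h2 := cardsUI (vs A) (vs B); rewrite vsU; lia.
Qed.

Lemma vsI (A B : {set E}) : #|vs (A :&: B)| <= #|vs A :&: vs B|.
Proof.
apply: subset_leq_card; rewrite subsetI !vsS // ?subsetIl ?subsetIr //.
Qed.

Lemma vsD1 (X : {set E}) e : #|vs X| <= #|vs (X :\ e)| + 2.
Proof.
have : vs X \subset vs (X :\ e) :|: vs [set e].
  rewrite -vsU; apply: vsS; apply/subsetP=> x xX; rewrite !inE.
  by case: (x =P e); rewrite ?xX.
move/subset_leq_card; rewrite cardsU.
suff : #|vs [set e]| <= 2 by lia.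
have : vs [set e] \subset [set (ends e).1; (ends e).2].
  apply/subsetP=> v; rewrite in_vs => /existsP[x]; rewrite inE => /andP[/eqP-> ].
  by rewrite /incident !inE => /orP[] /eqP->; rewrite eqxx ?orbT.
move/subset_leq_card; rewrite cardsU !cards1; lia.
Qed.

(* intermediate value: d X >= 1 gives nonempty Y with d Y = 1 *)
Lemma ivt (X : {set E}) : #|vs X| + 1 <= #|X| ->
  exists2 Y : {set E}, Y \subset X & (Y != set0) && (#|Y| == #|vs Y| + 1).
Proof.
move Hn: #|X| => n; elim: n X Hn => [|n IH] X Hn H; first lia.
have [Heq|Hne] := eqVneq #|X| (#|vs X| + 1).
  exists X => //; rewrite Heq eqxx andbT; apply/set0Pn.
  by apply/card_gt0P; lia.
have : X != set0 by apply/set0Pn; apply/card_gt0P; lia.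
case/set0Pn=> e eX.
have hc := cardsD1 e X; rewrite eX in hc.
have hv : #|vs (X :\ e)| <= #|vs X| by apply/subset_leq_card/vsS/subD1set.
have [Y YX HY] := IH (X :\ e) ltac:(lia) ltac:(lia).
by exists Y => //; apply: subset_trans YX (subD1set _ _).
Qed.

Lemma circ_exists (X : {set E}) : #|vs X| + 1 <= #|X| -> exists2 C, circ C & C \subset X.
Proof.
case/ivt=> Y YX HY; have [C HC CY] := minset_exists (P := fun X : {set E} => (X != set0) && (#|X| == #|vs X| + 1)) HY.
by exists C => //; apply: subset_trans YX.
Qed.

Lemma circP (C : {set E}) : circ C -> (C != set0) /\ #|C| = #|vs C| + 1.
Proof. by case/minsetP=> /andP[-> /eqP->]. Qed.

Lemma circ_min (C D : {set E}) : circ C -> circ D -> D \subset C -> D = C.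
Proof.
move=> /minsetP[_ HC] /minsetP[HD _] DC; exact: HC.
Qed.

Lemma circ_proper (C Y : {set E}) : circ C -> Y \subset C -> Y != C -> #|Y| <= #|vs Y|.
Proof.
move=> HC YC YnC; rewrite leqNgt; apply/negP=> H.
have [D HD DY] := circ_exists (X := Y) ltac:(by rewrite addn1).
have := circ_min HC HD (subset_trans DY YC) => DC.
move: DY; rewrite DC => CY; case/negP: YnC; rewrite eqEsubset YC CY //.
Qed.

Lemma circ_card (C : {set E}) : circ C -> 2 <= #|C|.
Proof. by case/circP=> /vs_nonempty; lia. Qed.


Lemma card_subD1 (A B : {set E}) w : w \in B -> A \subset B :\ w -> #|A| < #|B|.
Proof.
move=> wB /subset_leq_card; have := cardsD1 w B; rewrite wB; lia.
Qed.

Lemma weak_elim (C1 C2 : {set E}) x : circ C1 -> circ C2 -> C1 != C2 ->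
  x \in C1 -> x \in C2 -> exists2 C3, circ C3 & C3 \subset (C1 :|: C2) :\ x.
Proof.
move=> H1 H2 n12 x1 x2.
have hI : #|C1 :&: C2| <= #|vs (C1 :&: C2)|.
  apply: (circ_proper H1); first exact: subsetIl.
  apply/negP=> /eqP hI; have : C1 \subset C2 by rewrite -hI subsetIr.
  by move/(circ_min H2 H1) => E12; rewrite E12 eqxx in n12.
have := cardUI_d C1 C2; have := vsI C1 C2; have [_ c1] := circP H1; have [_ c2] := circP H2.
set U := C1 :|: C2 => hv hc.
have xU : x \in U by rewrite inE x1.
have := cardsD1 x U; rewrite xU => hd.
have hv' : #|vs (U :\ x)| <= #|vs U| by apply/subset_leq_card/vsS/subD1set.
apply: circ_exists; lia.
Qed.

Lemma meet_other (C C3 D : {set E}) a : circ C -> circ C3 -> C3 \subset C :|: D ->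
  a \in C -> a \notin C3 -> exists g, [/\ g \in C3, g \in D & g \notin C].
Proof.
move=> HC H3 sub aC a3.
have [g /andP[g3 /andP[gD gC]] | none] := pickP (fun g => (g \in C3) && ((g \in D) && (g \notin C))).
  by exists g.
have C3C : C3 \subset C.
  apply/subsetP=> g g3; have := subsetP sub g g3; rewrite inE => /orP[]// gD.
  by have := none g; rewrite g3 gD /=; case: (g \in C).
have := circ_min HC H3 C3C => e; by rewrite e aC in a3.
Qed.

Lemma strong_elim n : forall (C1 C2 : {set E}) e f, #|C1 :|: C2| <= n ->
  circ C1 -> circ C2 -> e \in C1 -> e \in C2 -> f \in C1 -> f \notin C2 ->
  exists C3, [/\ circ C3, f \in C3 & C3 \subset (C1 :|: C2) :\ e].
Proof.
elim: n => [|n IH] C1 C2 e f Hn H1 H2 e1 e2 f1 f2.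
  have : 0 < #|C1 :|: C2| by apply/card_gt0P; exists e; rewrite inE e1.
  lia.
have n12 : C1 != C2 by apply/negP=> /eqP E12; rewrite -E12 f1 in f2.
have [C3 H3 s3] := weak_elim H1 H2 n12 e1 e2.
case f3: (f \in C3); first by exists C3.
have e3 : e \notin C3 by apply/negP=> /(subsetP s3); rewrite !inE eqxx.
have s3' : C3 \subset C1 :|: C2 by apply: subset_trans s3 (subD1set _ _).
have [g [g3 g2 g1]] := meet_other H1 H3 s3' e1 e3.
have c4 : #|C2 :|: C3| <= n.
  suff h : #|C2 :|: C3| < #|C1 :|: C2| by rewrite -ltnS; exact: leq_trans h Hn.
  apply: (card_subD1 (w:=f)); first by rewrite inE f1.
  apply/subsetP=> x; rewrite !inE => /orP[x2|x3].
    by rewrite x2 orbT andbT; apply/eqP=> xf; rewrite -xf x2 in f2.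
  have := subsetP s3' x x3; rewrite inE => ->; rewrite andbT.
  by apply/eqP=> xf; rewrite -xf x3 in f3.
have [C4 [H4 e4 s4]] := IH C2 C3 g e c4 H2 H3 g2 g3 e2 e3.
have f4 : f \notin C4.
  apply/negP=> /(subsetP s4); rewrite !inE => /andP[_ /orP[]] hf.
    by rewrite hf in f2.
  by rewrite hf in f3.
have g4 : g \notin C4 by apply/negP=> /(subsetP s4); rewrite !inE eqxx.
have s4' : C4 \subset C1 :|: C2.
  apply/subsetP=> x /(subsetP s4); rewrite !inE => /andP[_ /orP[->|x3]]; first by rewrite orbT.
  by have := subsetP s3' x x3; rewrite inE.
have c5 : #|C1 :|: C4| <= n.
  suff h : #|C1 :|: C4| < #|C1 :|: C2| by rewrite -ltnS; exact: leq_trans h Hn.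
  apply: (card_subD1 (w:=g)); first by rewrite inE g2 orbT.
  apply/subsetP=> x; rewrite !inE => /orP[x1|x4].
    by rewrite x1 andbT; apply/eqP=> xg; rewrite -xg x1 in g1.
  have := subsetP s4' x x4; rewrite inE => ->; rewrite andbT.
  by apply/eqP=> xg; rewrite -xg x4 in g4.
have [C5 [H5 f5 s5]] := IH C1 C4 e f c5 H1 H4 e1 e4 f1 f4.
exists C5; split=> //; apply: subset_trans s5 _; apply/subsetP=> x.
rewrite !inE => /andP[-> /orP[->//|x4]] /=.
by have := subsetP s4' x x4; rewrite inE.
Qed.


Lemma trans_circ n : forall (C1 C2 : {set E}) x y z, #|C1 :|: C2| <= n ->
  circ C1 -> circ C2 -> y \in C1 -> y \in C2 -> x \in C1 -> z \in C2 ->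
  exists C, [/\ circ C, x \in C & z \in C].
Proof.
elim: n => [|n IH] C1 C2 x y z Hn H1 H2 y1 y2 x1 z2.
  have h : 0 < #|C1 :|: C2| by apply/card_gt0P; exists y; rewrite inE y1.
  by rewrite leqn0 in Hn; rewrite (eqP Hn) in h.
case z1: (z \in C1); first by exists C1.
case x2: (x \in C2); first by exists C2.
have [C3 [H3 z3 s3]] := strong_elim (leqnn _) H2 H1 y2 y1 z2 (negbT z1).
case x3: (x \in C3); first by exists C3.
have y3 : y \notin C3 by apply/negP=> /(subsetP s3); rewrite !inE eqxx.
have s3' : C3 \subset C2 :|: C1 by apply: subset_trans s3 (subD1set _ _).
have [w [w3 w1 w2]] := meet_other H2 H3 s3' y2 y3.
have [C4 [H4 x4 s4]] := strong_elim (leqnn _) H1 H3 w1 w3 x1 (negbT x3).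
have w4 : w \notin C4 by apply/negP=> /(subsetP s4); rewrite !inE eqxx.
have s4' : C4 \subset C1 :|: C3 by apply: subset_trans s4 (subD1set _ _).
have [y' [y'4 y'3 y'1]] := meet_other H1 H4 s4' w1 w4.
have y'2 : y' \in C2 by have := subsetP s3' y' y'3; rewrite inE (negbTE y'1) orbF.
have c : #|C4 :|: C2| <= n.
  suff h : #|C4 :|: C2| < #|C1 :|: C2| by rewrite -ltnS; exact: leq_trans h Hn.
  apply: (card_subD1 (w:=w)); first by rewrite inE w1.
  apply/subsetP=> u; rewrite !inE => /orP[u4|u2].
    have uw : u != w by apply/eqP=> uw; rewrite -uw u4 in w4.
    rewrite uw /=; have := subsetP s4' u u4; rewrite inE => /orP[->//|u3].
    by have := subsetP s3' u u3; rewrite inE orbC.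
  have uw : u != w by apply/eqP=> uw; rewrite -uw u2 in w2.
  by rewrite uw u2 orbT.
exact: IH c H4 H2 y'4 y'2 x4 z2.
Qed.

Definition xi (a b : E) := exists C, [/\ circ C, a \in C & b \in C].

Lemma xi_trans a b c : xi a b -> xi b c -> xi a c.
Proof.
move=> [C1 [H1 a1 b1]] [C2 [H2 b2 c2]]; exact: trans_circ (leqnn _) H1 H2 b1 b2 a1 c2.
Qed.

Lemma xi_sym a b : xi a b -> xi b a.
Proof. by move=> [C [H a1 b1]]; exists C. Qed.

Lemma in_circ_of n : forall (T : {set E}) h, #|T| <= n -> h \in T ->
  (forall S : {set E}, S \subset T :\ h -> #|S| + #|vs T| < #|T| + #|vs S|) ->
  exists C, [/\ circ C, C \subset T & h \in C].
Proof.
elim: n => [|n IH] T h Hn hT HS.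
  have h0 : 0 < #|T| by apply/card_gt0P; exists h.
  by rewrite leqn0 in Hn; rewrite (eqP Hn) in h0.
have HT : #|vs T| + 1 <= #|T|.
  by have := HS set0 (sub0set _); rewrite vs0 !cards0 add0n addn0 addn1.
have [C HC CT] := circ_exists HT.
case hC: (h \in C); first by exists C.
have [Cn0 cC] := circP HC.
have [c cC'] := set0Pn _ Cn0.
have cT : c \in T := subsetP CT c cC'.
have hc : h != c by apply/eqP=> e; rewrite e cC' in hC.
have hT' : h \in T :\ c by rewrite !inE hc.
have cardT := cardsD1 c T; rewrite cT in cardT.
have vT' : #|vs (T :\ c)| <= #|vs T| by apply/subset_leq_card/vsS/subD1set.
have n' : #|T :\ c| <= n by rewrite -ltnS; apply: leq_trans Hn; rewrite cardT.
have [C' [H' s' h']] : exists C', [/\ circ C', C' \subset T :\ c & h \in C'].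
  apply: IH n' hT' _ => S sS.
  rewrite ltnNge; apply/negP=> bad.
  have cS : c \notin S by apply/negP=> /(subsetP sS); rewrite !inE eqxx andbF.
  have sU : S :|: C \subset T :\ h.
    apply/subsetP=> x; rewrite inE => /orP[xS|xC].
      by have := subsetP sS x xS; rewrite !inE => /and3P[-> _ ->].
    rewrite !inE (subsetP CT x xC) andbT; apply/eqP=> xh; by rewrite -xh xC in hC.
  have hU := HS _ sU.
  have cnt := cardUI_d S C.
  have vI := vsI S C.
  have pI : #|S :&: C| <= #|vs (S :&: C)|.
    apply: (circ_proper HC); first exact: subsetIr.
    by apply/negP=> /eqP e; move: cC'; rewrite -e inE (negbTE cS).
  lia.
by exists C'; split=> //; apply: subset_trans s' (subD1set _ _).
Qed.

Lemma crossing (A : {set V}) a b : a \in A -> b \notin A -> connect (adj ends) a b ->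
  exists e, ((ends e).1 \in A) != ((ends e).2 \in A).
Proof.
move=> aA bA cab.
case: (boolP [exists e, ((ends e).1 \in A) != ((ends e).2 \in A)]) => [/existsP//|/existsPn none].
have cl : closed (adj ends) A.
  move=> x y /existsP[e /orP[] /eqP He]; have := none e; rewrite He /= negbK => /eqP //.
by have := closed_connect cl cab; rewrite aA (negbTE bA).
Qed.

Definition W v := #|[set e | (ends e).1 == v]| + #|[set e | (ends e).2 == v]|.

Lemma W_ge2 : no_isolated ends -> (forall v, ~ is_leaf ends v) -> forall v, 2 <= W v.
Proof.
move=> hI hL v; rewrite /W.
set I1 := [set e | (ends e).1 == v]; set I2 := [set e | (ends e).2 == v].
have hInc : [set f | incident ends v f] = I1 :|: I2.
  by apply/setP=> f; rewrite !inE /incident.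
have cU := cardsU I1 I2; rewrite -hInc in cU.
have [e ie] := hI v.
have : 0 < #|[set f | incident ends v f]| by apply/card_gt0P; exists e; rewrite inE.
case: (ltnP 1 #|[set f | incident ends v f]|) => [h2 _|h1 h0]; first by lia.
have /cards1P[e' He'] : #|[set f | incident ends v f]| == 1 by rewrite eqn_leq h1 h0.
have le' : is_loop ends e'.
  apply/negPn/negP=> nl; apply: (hL v); by exists e'.
have : e' \in [set f | incident ends v f] by rewrite He' set11.
rewrite inE /incident => hv; move: le'; rewrite /is_loop => /eqP hl.
have g1 : 0 < #|I1|.
  by apply/card_gt0P; exists e'; rewrite inE; case/orP: hv => //; rewrite hl.
have g2 : 0 < #|I2|.
  by apply/card_gt0P; exists e'; rewrite inE; case/orP: hv => //; rewrite -hl.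
lia.
Qed.

Lemma part1 (f : E -> V) (R : {set V}) :
  \sum_(v in R) #|[set e | f e == v]| = \sum_e ((f e \in R) : nat).
Proof.
have -> : \sum_e ((f e \in R) : nat) = \sum_(e | f e \in R) 1.
  by rewrite [RHS]big_mkcond /=; apply: eq_bigr => e _; case: (f e \in R).
rewrite (@partition_big _ _ _ _ _ _ (fun e => f e \in R) f (fun v => v \in R)) //=.
apply: eq_bigr => v vR; rewrite -sum1_card; apply: eq_bigl => e.
by rewrite inE; case: eqP => [->|]; rewrite ?vR ?andbF.
Qed.

Lemma handshake (R : {set V}) :
  \sum_(v in R) W v = \sum_e (((ends e).1 \in R) + ((ends e).2 \in R)).
Proof.
rewrite /W big_split /= (part1 (fun e => (ends e).1)) (part1 (fun e => (ends e).2)).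
by rewrite -big_split.
Qed.

End M1.

Section E1.
Variables (V E : finType) (ends : E -> V * V).
Local Notation vs := (vset ends).
Local Notation circ := (M1_circuit ends).

Lemma vsT : no_isolated ends -> vs setT = setT.
Proof.
move=> hI; apply/setP=> v; rewrite in_setT in_vs; have [e ie] := hI v.
by apply/existsP; exists e; rewrite inE.
Qed.

Lemma vs_set1 g : vs [set g] \subset [set (ends g).1; (ends g).2].
Proof.
apply/subsetP=> v; rewrite in_vs => /existsP[x]; rewrite inE => /andP[/eqP-> ].
by rewrite /incident !inE => /orP[] /eqP->; rewrite eqxx ?orbT.
Qed.

Lemma vs_add (S : {set E}) g :
  ((ends g).1 \in vs S) || ((ends g).2 \in vs S) -> #|vs (g |: S)| <= #|vs S| + 1.
Proof.
move=> hg.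
have sub : vs (g |: S) \subset (ends g).1 |: ((ends g).2 |: vs S).
  rewrite vsU; apply/subsetP=> v; rewrite in_setU => /orP[vg|vS].
    by have := subsetP (vs_set1 g) v vg; rewrite !inE => /orP[]->; rewrite ?orbT.
  by rewrite !in_setU1 vS !orbT.
have := subset_leq_card sub; rewrite !cardsU1.
case/orP: hg => h; first by rewrite in_setU1 h orbT /=; case: (_ \notin _); lia.
by rewrite h /=; case: (_ \notin _); lia.
Qed.

Lemma sum_ind (A : {set E}) k : \sum_e ((e \in A) * k) = #|A| * k.
Proof.
rewrite -sum_nat_const [RHS]big_mkcond; apply: eq_bigr => e _.
by case: (e \in A); rewrite ?mul1n ?mul0n.
Qed.


Lemma every_edge : no_isolated ends -> (forall v, ~ is_leaf ends v) ->
  graph_connected ends -> forall C0, circ C0 -> forall h, xi ends h h.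
Proof.
move=> hI hL hC C0 H0 h.
case h0: (h \in C0); first by exists C0.
have [C [HC _ hC']] : exists C, [/\ circ C, C \subset setT & h \in C].
  apply: (in_circ_of (n:=#|[set: E]|)) => //.
  move=> S0 sS0; rewrite ltnNge; apply/negP => bad.
  pose P := fun S : {set E} => (S \subset [set: E] :\ h) &&
    (#|[set: E]| + #|vs S| <= #|S| + #|vs [set: E]|).
  have PS0 : P S0 by rewrite /P sS0 bad.
  have [S [sS PSd maxS]] : exists S : {set E}, [/\ S \subset [set: E] :\ h,
      #|[set: E]| + #|vs S| <= #|S| + #|vs [set: E]| & forall S', P S' -> #|S'| <= #|S|].
    by case: (arg_maxnP (fun S : {set E} => #|S|) PS0) => S /andP[? ?] m; exists S.
  rewrite vsT // !cardsT in PSd.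
  have hS : h \notin S by apply/negP=> /(subsetP sS); rewrite !inE eqxx.
  have ext : forall g, g \notin S -> g != h ->
      ((ends g).1 \notin vs S) && ((ends g).2 \notin vs S).
    move=> g gS gh; rewrite -negb_or; apply/negP => hg.
    have Pg : P (g |: S).
      apply/andP; split.
        apply/subsetP=> x; rewrite in_setU1 => /orP[/eqP->|xS]; first by rewrite !inE gh.
        exact: subsetP sS x xS.
      rewrite vsT // !cardsT cardsU1 gS /=; have := vs_add hg.
      set nE := #|E| in PSd *; set nV := #|V| in PSd *; lia.
    by have := maxS _ Pg; rewrite cardsU1 gS /= ltnn.
  have Sn0 : S != set0.
    apply/negP=> /eqP S0e; rewrite S0e vs0 cards0 in PSd.
    have PC : P C0.
      apply/andP; split.
        apply/subsetP=> x xC; rewrite !inE andbT; apply/eqP=> xh; by rewrite -xh xC in h0.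
      rewrite vsT // !cardsT; have [_ c0] := circP H0; rewrite cards0 in PSd; lia.
    by have := maxS _ PC; rewrite S0e cards0 leqn0 => /eqP c0; have := circ_card H0; rewrite c0.
  set R := ~: vs S.
  have hcross : ((ends h).1 \in vs S) || ((ends h).2 \in vs S).
    apply/negPn/negP; rewrite negb_or => /andP[h1 h2].
    have [x xS] := set0Pn _ Sn0.
    have /andP[a1 _] := ends_vs ends xS.
    have [e He] := crossing a1 h1 (hC _ _).
    case eS: (e \in S).
      by move: He; have /andP[-> ->] := ends_vs ends eS.
    case eh: (e == h).
      by move: He; rewrite (eqP eh) (negbTE h1) (negbTE h2).
    have /andP[n1 n2] := ext e (negbT eS) (negbT eh).
    by move: He; rewrite (negbTE n1) (negbTE n2).
  have low : #|R| * 2 <= \sum_(v in R) W ends v.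
    rewrite -sum_nat_const; apply: leq_sum => v _; exact: W_ge2.
  rewrite handshake in low.
  have up : \sum_e (((ends e).1 \in R) + ((ends e).2 \in R)) + 1 <= #|~: S| * 2.
    rewrite -sum_ind (bigD1 h) //= [X in _ <= X](bigD1 h) //= in_setC hS /=.
    have ch : ((ends h).1 \in R) + ((ends h).2 \in R) <= 1.
      by rewrite /R !in_setC; case/orP: hcross => ->; case: (_ \in _).
    have rest : \sum_(e | e != h) (((ends e).1 \in R) + ((ends e).2 \in R)) <=
                \sum_(e | e != h) ((e \in ~: S) * 2).
      apply: leq_sum => e _; rewrite in_setC.
      case eS: (e \in S) => /=.
        by have /andP[a1 a2] := ends_vs ends eS; rewrite /R !in_setC a1 a2.
      by case: (_ \in R); case: (_ \in R).
    lia.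
  have c1 := cardsC S; have c2 := cardsC (vs S); rewrite -/R in c2.
  set nE := #|E| in PSd c1; set nV := #|V| in PSd c2.
  set sm := \sum_e _ in low up.
  lia.
by exists C.
Qed.

End E1.

Section E2.
Variables (V E : finType) (ends : E -> V * V).
Local Notation vs := (vset ends).
Local Notation circ := (M1_circuit ends).

Lemma share_vertex (D1 D2 : {set E}) g g' v : circ D1 -> circ D2 -> g \in D1 -> g' \in D2 ->
  incident ends v g -> incident ends v g' -> xi ends g g'.
Proof.
move=> H1 H2 g1 g2 ig ig'.
case: (boolP [exists x, (x \in D1) && (x \in D2)]) => [/existsP[x /andP[x1 x2]] | /existsPn disj].
  exact: trans_circ (leqnn _) H1 H2 x1 x2 g1 g2.
have I0 : D1 :&: D2 = set0.
  by apply/setP=> x; rewrite !inE; have := disj x; case: (x \in D1); case: (x \in D2).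
have vI : 0 < #|vs D1 :&: vs D2|.
  apply/card_gt0P; exists v; rewrite in_setI !in_vs.
  by apply/andP; split; apply/existsP; [exists g; rewrite g1|exists g'; rewrite g2].
have cnt := cardUI_d ends D1 D2; rewrite I0 cards0 in cnt.
have [_ c1] := circP H1; have [_ c2] := circP H2.
set U := D1 :|: D2 in cnt.
have gg' : g != g' by apply/eqP=> e; have := disj g; rewrite g1 e g2.
have gU : g \in U by rewrite inE g1.
have g'U : g' \in U :\ g by rewrite !inE eq_sym gg' g2 orbT.
have d1 := cardsD1 g U; rewrite gU in d1.
have d2 := cardsD1 g' (U :\ g); rewrite g'U in d2.
have vW : #|vs ((U :\ g) :\ g')| <= #|vs U|.
  by apply/subset_leq_card/(vsS ends); apply: subset_trans (subD1set _ _) (subD1set _ _).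
have [D3 H3 s3] : exists2 D3, circ D3 & D3 \subset (U :\ g) :\ g'.
  by apply: circ_exists; lia.
have s3a : D3 \subset D2 :|: D1.
  by rewrite setUC; apply: subset_trans s3 _; apply: subset_trans (subD1set _ _) (subD1set _ _).
have s3b : D3 \subset D1 :|: D2.
  by apply: subset_trans s3 _; apply: subset_trans (subD1set _ _) (subD1set _ _).
have g'3 : g' \notin D3 by apply/negP=> /(subsetP s3); rewrite !inE eqxx.
have g3 : g \notin D3 by apply/negP=> /(subsetP s3); rewrite !inE eqxx andbF.
have [p [p3 p1 _]] := meet_other H2 H3 s3a g2 g'3.
have [q [q3 q2 _]] := meet_other H1 H3 s3b g1 g3.
apply: (@xi_trans _ _ _ _ p); first by exists D1.
apply: (@xi_trans _ _ _ _ q); first by exists D3.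
by exists D2.
Qed.


Lemma adj_ends x : adj ends (ends x).1 (ends x).2 && adj ends (ends x).2 (ends x).1.
Proof.
by apply/andP; split; apply/existsP; exists x; rewrite -surjective_pairing eqxx ?orbT.
Qed.

Lemma a1_a2 : no_isolated ends -> m_nontrivial circ -> graph_connected ends ->
  cacti_graph ends -> m_connected circ.
Proof.
move=> hI [[C0 H0] _] hC [_ hL _].
have [e0 e0C] := set0Pn _ (circP H0).1.
pose K := [set g | [exists C : {set E}, [&& circ C, e0 \in C & g \in C]]].
have KP g : g \in K -> xi ends e0 g.
  by rewrite inE => /existsP[C /and3P[HC a b]]; exists C.
have PK g : xi ends e0 g -> g \in K.
  by case=> C [HC a b]; rewrite inE; apply/existsP; exists C; rewrite HC a b.
have e0K : e0 \in K by apply: PK; exists C0.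
have allK : forall h, h \in K.
  move=> h; apply/negPn/negP=> hK.
  have [v [g [g' [gK g'K [ig ig']]]]] : exists v g g', [/\ g \in K, g' \notin K &
      incident ends v g /\ incident ends v g'].
    set A := vs K.
    case: (boolP (((ends h).1 \in A) || ((ends h).2 \in A))) => [hA|].
      have [v vA iv] : exists2 v, v \in A & incident ends v h.
        case/orP: hA => hA; [exists (ends h).1|exists (ends h).2]; rewrite // /incident eqxx ?orbT //.
      move: vA; rewrite in_vs => /existsP[g /andP[gK ig]].
      by exists v, g, h.
    rewrite negb_or => /andP[h1 _].
    have /andP[a1 _] := ends_vs ends e0K.
    have [x Hx] := crossing a1 h1 (hC _ _).
    have xK : x \notin K.
      by apply/negP=> xK; move: Hx; have /andP[-> ->] := ends_vs ends xK.
    have [v vA iv] : exists2 v, v \in A & incident ends v x.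
      case x1: ((ends x).1 \in A).
        by exists (ends x).1; rewrite // /incident eqxx.
      exists (ends x).2; last by rewrite /incident eqxx orbT.
      by move: Hx; rewrite x1; case: (_ \in A).
    move: vA; rewrite in_vs => /existsP[g /andP[gK ig]].
    by exists v, g, x.
  have [D1 [H1 _ g1]] := KP g gK.
  have [D2 [H2 g2 _]] := every_edge hI hL hC H0 g'.
  have := share_vertex H1 H2 g1 g2 ig ig' => x12.
  by case/negP: g'K; apply: PK; apply: xi_trans (KP g gK) x12.
split.
  by apply: leq_trans (circ_card H0) (max_card _).
move=> e f _.
have := xi_trans (xi_sym (KP e (allK e))) (KP f (allK f)).
by case=> C [HC a b]; exists C.
Qed.

End E2.

Section E3.
Variables (V E : finType) (ends : E -> V * V).
Local Notation vs := (vset ends).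
Local Notation circ := (M1_circuit ends).

Lemma circ_closed (C : {set E}) (K : {set V}) e f : circ C -> e \in C -> f \in C ->
  (forall x, ((ends x).1 \in K) = ((ends x).2 \in K)) -> (ends e).1 \in K -> (ends f).1 \in K.
Proof.
move=> HC eC fC clK eK.
pose C1 := C :&: [set x | (ends x).1 \in K].
pose C2 := C :&: [set x | (ends x).1 \notin K].
apply/negPn/negP => fK.
have fC1 : f \notin C1 by rewrite !inE (negbTE fK) andbF.
have fC2 : f \in C2 by rewrite !inE fC fK.
have eC2 : e \notin C2 by rewrite !inE eC eK.
have U : C1 :|: C2 = C.
  by apply/setP=> x; rewrite !inE; case: (x \in C); case: (_ \in K).
have I0 : C1 :&: C2 = set0.
  by apply/setP=> x; rewrite !inE; case: (x \in C); case: (_ \in K).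
have VI0 : vs C1 :&: vs C2 = set0.
  apply/setP=> v; rewrite in_setI !in_vs inE.
  apply/negP=> /andP[/existsP[x /andP[x1 ix]] /existsP[y /andP[y2 iy]]].
  have vK : v \in K.
    move: ix x1; rewrite /incident !inE => /orP[] /eqP <- /andP[_]; first by [].
    by rewrite clK.
  move: iy y2 vK; rewrite /incident !inE => /orP[] /eqP <- /andP[_ nK] vK.
    by rewrite vK in nK.
  by rewrite clK vK in nK.
have p1 := circ_proper (Y := C1) HC (subsetIl C _) ltac:(by apply/negP=> /eqP h; move: fC1; rewrite h fC).
have p2 := circ_proper (Y := C2) HC (subsetIl C _) ltac:(by apply/negP=> /eqP h; move: eC2; rewrite h eC).
have cnt := cardUI_d ends C1 C2.
rewrite U I0 VI0 !cards0 in cnt.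
have [_ cC] := circP HC.
lia.
Qed.

Lemma circ_connected (C : {set E}) e f : circ C -> e \in C -> f \in C ->
  connect (adj ends) (ends e).1 (ends f).1 && connect (adj ends) (ends e).1 (ends f).2.
Proof.
move=> HC eC fC.
pose K := [set x | connect (adj ends) (ends e).1 x].
have clK x : ((ends x).1 \in K) = ((ends x).2 \in K).
  have /andP[h12 h21] := adj_ends ends x.
  rewrite !inE; apply/idP/idP => h.
    exact: connect_trans h (connect1 h12).
  exact: connect_trans h (connect1 h21).
have := circ_closed HC eC fC clK; rewrite !inE connect0 => /(_ isT) h1.
by have := clK f; rewrite !inE h1 => <-.
Qed.


Lemma a2_a1 : no_isolated ends -> m_connected circ ->
  m_nontrivial circ /\ graph_connected ends /\ cacti_graph ends.
Proof.
move=> hI [hE hc].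
have [e0 [e1 [_ _ ne01]]] := card_gt1P hE.
have pair : forall x y, exists C, [/\ circ C, x \in C & y \in C].
  move=> x y; case: (eqVneq x y) => [<-|nxy]; last exact: hc.
  case: (eqVneq x e0) => [->|nx0].
    by have [C [HC a _]] := hc _ _ ne01; exists C.
  by have [C [HC a _]] := hc _ _ nx0; exists C.
have [C0 [H0 _ _]] := pair e0 e0.
have gc : graph_connected ends.
  move=> u w; have [e ie] := hI u; have [f jf] := hI w.
  have [C [HC eC fC]] := pair e f.
  have /andP[c1 c2] := circ_connected HC eC fC.
  have /andP[a12 a21] := adj_ends ends e.
  have cu : connect (adj ends) u (ends e).1.
    case/orP: ie => /eqP <-; first exact: connect0.
    exact: connect1.
  apply: connect_trans cu _.
  by case/orP: jf => /eqP <-.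
split; last split => //.
  split; first by exists C0.
  pose Q := fun X : {set E} => [forall B : {set E}, m_basis circ B ==> (X :&: B != set0)].
  have QT : Q setT.
    apply/forallP=> B; apply/implyP=> /maxsetP[iB mB]; rewrite setTI.
    apply/negP=> /eqP B0.
    have ie : m_indep circ [set e0].
      apply/forallP=> C; apply/implyP=> HC; apply/negP; rewrite subset1 => /orP[] /eqP CE.
        have [_ cC] := circP HC; move: cC; rewrite CE cards1.
        have := vs1_gt0 ends e0; lia.
      by have [Cn _] := circP HC; rewrite CE eqxx in Cn.
    have := mB _ ie; rewrite B0 sub0set => /(_ isT) h.
    by have := set11 e0; rewrite h inE.
  have [D HD _] := minset_exists QT.
  by exists D.
split => //.
  move=> v [e [He _]].
  have [C [HC eC _]] := pair e e.
  have ive : incident ends v e by have := set11 e; rewrite -He inE.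
  have vC : v \in vs C by rewrite in_vs; apply/existsP; exists e; rewrite eC.
  have vC' : v \notin vs (C :\ e).
    rewrite in_vs; apply/negP=> /existsP[x /andP[xC ix]].
    have : x \in [set f | incident ends v f] by rewrite inE.
    by rewrite He inE => /eqP xe; move: xC; rewrite xe !inE eqxx.
  have pr : vs (C :\ e) \proper vs C.
    apply/properP; split; last by exists v.
    exact/(vsS ends)/subD1set.
  have lt := proper_card pr.
  have cd := cardsD1 e C; rewrite eC in cd.
  have p := circ_proper (Y := C :\ e) HC (subD1set _ _) ltac:(by apply/negP=> /eqP h; move: eC; rewrite -h !inE eqxx).
  have [_ cC] := circP HC.
  lia.
move=> v [n [f [g [injf injg hends _ hcomp]]]].
have compT : component ends v = setT.
  by apply/setP=> x; rewrite inE in_setT; apply: gc.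
have ceT : comp_edges ends setT = setT by apply/setP=> x; rewrite !inE.
rewrite compT ceT in hcomp.
pose I := [set i | g i \in C0].
have CI : C0 = g @: I.
  apply/setP=> x; apply/idP/imsetP.
    move=> xC; have : x \in [set: E] by rewrite in_setT.
    by rewrite hcomp => /imsetP[i _ xi]; exists i; rewrite // inE -xi.
  by case=> i; rewrite inE => iI ->.
have c1 : #|C0| = #|I| by rewrite CI card_imset.
have sub : f @: I \subset vs C0.
  apply/subsetP=> _ /imsetP[i iI ->]; rewrite in_vs; apply/existsP; exists (g i).
  rewrite inE in iI; rewrite iI /incident.
  by case: (hends i) => ->; rewrite eqxx ?orbT.
have := subset_leq_card sub; rewrite card_imset // -c1.
have [_ cC] := circP H0.
lia.
Qed.

End E3.

Theorem mainTheorem15 (V E : finType) (ends : E -> V * V)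
  (hG : no_isolated ends) :
  (m_nontrivial (M1_circuit ends) /\ graph_connected ends /\ cacti_graph ends)
  <-> m_connected (M1_circuit ends).
Proof.
split.
  by case=> nt [gc ca]; exact: a1_a2 hG nt gc ca.
by move=> mc; exact: a2_a1 hG mc.
Qed.
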